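(* Let $H$ be a real Hilbert space with inner product $(\cdot,\cdot)_H$ and norm $\|\cdot\|_H$. Let $\mathcal{L}$ be a symmetric positive definite linear operator on $H$ and $f:H\to\mathbb{R}$ Fréchet differentiable with $\nabla f$ Lipschitz continuous with constant $L$. For each $\Phi\in H$ let $\mathbf{L}(\Phi)=\mathbf{M}(\Phi)+\mathbf{S}(\Phi)$ with $\mathbf{S}(\Phi)$ skew-symmetric and $-\mathbf{M}(\Phi)$ symmetric positive definite, and assume there are constants $\alpha_{\mathbf{M}},\beta_{\mathbf{S}}>0$ such that for all $\Phi,\Psi_1,\Psi_2,\Psi\in H$: $(\mathbf{S}(\Phi)\Psi_1,\Psi_2)_H\le\beta_{\mathbf{S}}\|\Psi_1\|_H\|\Psi_2\|_H$ and $(-\mathbf{M}(\Phi)\Psi,\Psi)_H\ge\alpha_{\mathbf{M}}\|\Psi\|_H^2$. Let $\tau>0$, $A>0$, let $\Phi^{n-1},\Phi^n\in H$ and $\hat\Phi^{n+\frac12}\in H$ be given, and suppose $\Phi^{n+1}$ satisfies the SGE-SCN scheme $$\frac{\Phi^{n+1}-\Phi^n}{\tau}=\mathbf{L}(\hat\Phi^{n+\frac12})\mu^{n+\frac12},\qquad \mu^{n+\frac12}=\mathcal{L}\Phi^{n+\frac12}-\tau A\,\mathbf{M}(\hat\Phi^{n+\frac12})(\Phi^{n+1}-\Phi^n)+\tfrac32\nabla f(\Phi^n)-\tfrac12\nabla f(\Phi^{n-1}),$$ with $\Phi^{n+\frac12}=\frac12(\Phi^{n+1}+\Phi^n)$.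 Define $$\tilde E_{CN}(\Phi^{k+1},\Phi^k)=\tfrac12\|\mathcal{L}^{1/2}\Phi^{k+1}\|_H^2+f(\Phi^{k+1})+\tfrac L4\|\Phi^{k+1}-\Phi^k\|_H^2 .$$ Then, provided $A\ge\frac{L^2}{4}\big(1+\frac{\beta_{\mathbf{S}}}{\alpha_{\mathbf{M}}}\big)^2$ (so that the right-hand side below is nonpositive), $$\tilde E_{CN}(\Phi^{n+1},\Phi^n)-\tilde E_{CN}(\Phi^n,\Phi^{n-1})\le-\Big(2\big(1+\tfrac{\beta_{\mathbf{S}}}{\alpha_{\mathbf{M}}}\big)^{-1}\sqrt A-L\Big)\|\Phi^{n+1}-\Phi^n\|_H^2 .$$
   Context: $\|\mathcal{L}^{1/2}\Phi\|_H^2=(\Phi,\mathcal{L}\Phi)_H$. Skew-symmetric: $(\mathbf{S}\Phi,\Psi)_H=-(\Phi,\mathbf{S}\Psi)_H$. *)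

(* Defs.v *)
From HB Require Import structures.
From mathcomp Require Import all_boot all_order all_algebra.
From mathcomp Require Import all_classical all_reals all_analysis.
Set Implicit Arguments. Unset Strict Implicit. Unset Printing Implicit Defensive.
Import Order.TTheory GRing.Theory Num.Theory.
Import numFieldNormedType.Exports.
Local Open Scope ring_scope.

(* A real inner product on a (complete) normed space V whose norm is the
   norm induced by the inner product: together with completeness of V this
   makes (V, ip) a real Hilbert space. *)
Definition is_hilbert_inner (R : realType) (V : normedModType R)
    (ip : V -> V -> R) : Prop :=
  [/\ (forall x y, ip x y = ip y x),
      (forall a x y z, ip (a *: x + y) z = a * ip x z + ip y z),
      (forall x, 0 <= ip x x),
      (forall x, ip x x = 0 -> x = 0) &
      (forall x, `|x| = Num.sqrt (ip x x))].

Definition op_symmetric (R : realType) (V : normedModType R)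
    (ip : V -> V -> R) (T : V -> V) : Prop :=
  forall x y, ip (T x) y = ip x (T y).

Definition op_skew (R : realType) (V : normedModType R)
    (ip : V -> V -> R) (T : V -> V) : Prop :=
  forall x y, ip (T x) y = - ip x (T y).

Definition op_posdef (R : realType) (V : normedModType R)
    (ip : V -> V -> R) (T : V -> V) : Prop :=
  forall x, x != 0 -> 0 < ip (T x) x.

Definition has_gradient (R : realType) (V : normedModType R)
    (ip : V -> V -> R) (f : V -> R) (g : V -> V) : Prop :=
  forall x, differentiable f x /\ (forall h, 'd f x h = ip (g x) h).

(* ||L^{1/2} Phi||^2 = (Phi, L Phi); modified Crank-Nicolson energy *)
Definition E_CN (R : realType) (V : normedModType R) (ip : V -> V -> R)
    (Lc : V -> V) (f : V -> R) (L : R) (Phi1 Phi0 : V) : R :=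
  2^-1 * ip Phi1 (Lc Phi1) + f Phi1 + L / 4 * `|Phi1 - Phi0| ^+ 2.

(* Main.v *)
Require Import Defs.
From HB Require Import structures.
From mathcomp Require Import all_boot all_order all_algebra.
From mathcomp Require Import all_classical all_reals all_analysis.
From mathcomp Require Import ring lra.
Import Order.TTheory GRing.Theory Num.Theory.
Import numFieldNormedType.Exports.
Local Open Scope ring_scope.

Section Helpers.
Set Implicit Arguments.

Lemma quad_disc (R : realFieldType) (X B Y : R) : 0 <= Y ->
  (forall t, 0 <= X + 2 * t * B + t ^+ 2 * Y) -> B ^+ 2 <= X * Y.
Proof.
move=> Y0 H.
have [Yp|Ye] := boolP (0 < Y).
  have := H (- B / Y).
  have -> : X + 2 * (- B / Y) * B + (- B / Y) ^+ 2 * Y = (X * Y - B ^+ 2) / Y.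
    by field; rewrite gt_eqF.
  by rewrite pmulr_lge0 ?invr_gt0 // subr_ge0.
have Y00 : Y = 0 by apply/eqP; rewrite eq_le Y0 andbT leNgt.
subst Y.
have [B0|Bn] := eqVneq B 0; first by rewrite B0 expr0n /= mulr0.
have := H (- (X + 1) / (2 * B)).
have -> : X + 2 * (- (X + 1) / (2 * B)) * B + (- (X + 1) / (2 * B)) ^+ 2 * 0 = -1.
  by field.
by move=> h; lra.
Qed.

Section IP.
End IP.

Lemma CS_bil (R : realType) (V : normedModType R) (b : V -> V -> R) :
  (forall x y, b x y = b y x) ->
  (forall a x y z, b (a *: x + y) z = a * b x z + b y z) ->
  (forall x, 0 <= b x x) ->
  forall x y, b x y ^+ 2 <= b x x * b y y.
Proof.
move=> Hs Hl Hp x y.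
have bDl u v z : b (u + v) z = b u z + b v z by rewrite -[u]scale1r Hl mul1r scale1r.
have bZl a u z : b (a *: u) z = a * b u z.
  have b0 : forall z, b 0 z = 0.
    by move=> w; have := bDl 0 0 w; rewrite addr0 => h; apply: (addrI (b 0 w)); rewrite addr0 -h.
  by rewrite -[a *: u]addr0 Hl b0 addr0.
have bDr u v z : b z (u + v) = b z u + b z v by rewrite Hs bDl !(Hs _ z).
have bZr a u z : b z (a *: u) = a * b z u by rewrite Hs bZl Hs.
apply: quad_disc => [|t]; first exact: Hp.
have := Hp (x + t *: y).
by rewrite !(bDl, bDr, bZl, bZr) (Hs y x); congr (_ <= _); ring.
Qed.

Section HilbertFacts.
Context (R : realType) (V : normedModType R) (ip : V -> V -> R).
Hypothesis H : is_hilbert_inner ip.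

Lemma ipC x y : ip x y = ip y x.
Proof. by case: H. Qed.
Lemma ipDl x y z : ip (x + y) z = ip x z + ip y z.
Proof. by case: H => _ Hl _ _ _; rewrite -[x]scale1r Hl mul1r scale1r. Qed.
Lemma ip0l z : ip 0 z = 0.
Proof. by have := ipDl 0 0 z; rewrite addr0 => h; apply: (addrI (ip 0 z)); rewrite addr0 -h. Qed.
Lemma ipZl a x z : ip (a *: x) z = a * ip x z.
Proof. by case: H => _ Hl _ _ _; rewrite -[a *: x]addr0 Hl ip0l addr0. Qed.
Lemma ipNl x z : ip (- x) z = - ip x z.
Proof. by rewrite -scaleN1r ipZl mulN1r. Qed.
Lemma ipBl x y z : ip (x - y) z = ip x z - ip y z.
Proof. by rewrite ipDl ipNl. Qed.
Lemma ipDr x y z : ip z (x + y) = ip z x + ip z y.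
Proof. by rewrite ipC ipDl !(ipC _ z). Qed.
Lemma ipZr a x z : ip z (a *: x) = a * ip z x.
Proof. by rewrite ipC ipZl ipC. Qed.
Lemma ipNr x z : ip z (- x) = - ip z x.
Proof. by rewrite ipC ipNl ipC. Qed.
Lemma ipBr x y z : ip z (x - y) = ip z x - ip z y.
Proof. by rewrite ipDr ipNr. Qed.
Lemma ip0r z : ip z 0 = 0.
Proof. by rewrite ipC ip0l. Qed.
Lemma ip_ge0 x : 0 <= ip x x.
Proof. by case: H. Qed.
Lemma normsq x : `|x| ^+ 2 = ip x x.
Proof. by case: H => _ _ _ _ ->; rewrite sqr_sqrtr // ip_ge0. Qed.

Lemma ip_CS x y : ip x y <= `|x| * `|y|.
Proof.
have h := @CS_bil R V ip ipC (fun a x y z => (ltac:(case: H => _ Hl _ _ _; exact: Hl))) ip_ge0 x y.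
rewrite -!normsq in h.
have nx := normr_ge0 x; have ny := normr_ge0 y.
have p := mulr_ge0 nx ny; rewrite -exprMn in h; nra.
Qed.
End HilbertFacts.

End Helpers.

Lemma phi_derive (R : realType) (V : normedModType R) (f : V -> R) (d x : V) (t : R) :
  differentiable f (t *: d + x) ->
  is_derive t 1 (fun h : R => f (h *: d + x)) ('d f (t *: d + x) d).
Proof.
move=> df.
have ha : is_diff t (fun h : R => h *: d + x) (( *:%R^~ d) + cst 0 : R -> V).
  exact: is_diffD.
have hf : is_diff (t *: d + x) f ('d f (t *: d + x)).
  by apply: DiffDef.
have hc := @is_diff_comp R _ _ _ _ _ _ _ t ha hf.
apply: DeriveDef.
  exact/diff_derivable/differentiable_comp.
rewrite deriveE; last exact: differentiable_comp.
have -> : 'd (fun h : R => f (h *: d + x)) t = 'd (f \o (fun h : R => h *: d + x)) t by [].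
rewrite diff_val /=; congr ('d f _ _); rewrite !fctE /cst. by rewrite addr0; apply: scale1r.
Qed.

Lemma descent (R : realType) (V : normedModType R) (ip : V -> V -> R)
  (f : V -> R) (g : V -> V) (L : R) (x y : V) :
  is_hilbert_inner ip -> has_gradient ip f g ->
  (forall x y, `|g x - g y| <= L * `|x - y|) ->
  f y - f x <= ip (g x) (y - x) + L / 2 * `|y - x| ^+ 2.
Proof.
move=> H Hg Hlip.
set d := y - x.
set C := ip (g x) d.
set D := L / 2 * `|d| ^+ 2.
pose P : {poly R} := C *: 'X + D *: 'X^2.
pose k : R -> R := (fun h : R => f (h *: d + x)) - horner P.
have dk (t : R) : is_derive t 1 k (ip (g (t *: d + x)) d - P^`().[t]).
  apply: is_deriveB.
  have [df dfe] := Hg (t *: d + x).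
  by rewrite -dfe; apply: phi_derive.
have cont := @derivable_within_continuous R R k `[0, 1]%R (fun t _ => @ex_derive _ _ _ _ _ _ _ (dk t)).
have [c c01 Hc] := MVT ltr01 (fun t _ => dk t) cont.
have Pd : P^`().[c] = C + 2 * D * c.
  rewrite /P derivD !derivZ derivX derivXn !hornerE /=; rewrite /D; ring.
have k1 : k 1 = f y - (C + D).
  by rewrite /k /= !fctE scale1r /d subrK /P hornerD !hornerZ hornerX hornerXn expr1n !mulr1.
have k0 : k 0 = f x.
  by rewrite /k /= !fctE scale0r add0r /P hornerD !hornerZ hornerX hornerXn expr0n /= !(mulr0, mul0r, addr0, subr0).
rewrite k1 k0 Pd in Hc.
move: c01; rewrite in_itv /= => /andP[c0 c1].
have : ip (g (c *: d + x)) d - C <= L * c * `|d| ^+ 2.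
  rewrite /C -(ipBl H).
  apply: le_trans (ip_CS H _ _) _.
  apply: le_trans (ler_wpM2r (normr_ge0 d) (Hlip _ _)) _.
  rewrite addrK normrZ (ger0_norm (ltW c0)).
  by rewrite expr2 !mulrA.
rewrite /D in Hc *.
move=> h.
nra.
Qed.

Theorem theorem3p8 (R : realType) (V : completeNormedModType R)
  (ip : V -> V -> R) (Lc : {linear V -> V}) (f : V -> R) (gradf : V -> V)
  (L : R) (M S : V -> {linear V -> V}) (alphaM betaS tau A : R)
  (Phinm1 Phin Phihat Phinp1 : V) :
  is_hilbert_inner ip ->
  op_symmetric ip Lc -> op_posdef ip Lc ->
  has_gradient ip f gradf ->
  (forall x y, `|gradf x - gradf y| <= L * `|x - y|) ->
  (forall Phi, op_skew ip (S Phi)) ->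
  (forall Phi, op_symmetric ip (fun x => - M Phi x)) ->
  (forall Phi, op_posdef ip (fun x => - M Phi x)) ->
  0 < alphaM -> 0 < betaS ->
  (forall Phi Psi1 Psi2, ip (S Phi Psi1) Psi2 <= betaS * `|Psi1| * `|Psi2|) ->
  (forall Phi Psi, alphaM * `|Psi| ^+ 2 <= ip (- M Phi Psi) Psi) ->
  0 < tau -> 0 < A ->
  let Phihalf := 2^-1 *: (Phinp1 + Phin) in
  let mu := Lc Phihalf - (tau * A) *: M Phihat (Phinp1 - Phin)
            + (3 / 2) *: gradf Phin - 2^-1 *: gradf Phinm1 in
  tau^-1 *: (Phinp1 - Phin) = M Phihat mu + S Phihat mu ->
  L ^+ 2 / 4 * (1 + betaS / alphaM) ^+ 2 <= A ->
  E_CN ip Lc f L Phinp1 Phin - E_CN ip Lc f L Phin Phinm1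
    <= - (2 * (1 + betaS / alphaM)^-1 * Num.sqrt A - L) * `|Phinp1 - Phin| ^+ 2.
Proof.
move=> H Hsym _ Hg Hlip Hskew HMsym _ a0 b0 HS HM t0 A0 Phihalf mu Hsch _.
set d := Phinp1 - Phin.
set d' := Phin - Phinm1.
set X := ip (- M Phihat mu) mu.
set Y := ip (- M Phihat d) d.
have hd : d = tau *: (M Phihat mu + S Phihat mu).
  by rewrite -Hsch scalerA mulfV ?gt_eqF // scale1r.
have X0 : 0 <= X by apply: le_trans (HM _ _); exact: mulr_ge0 (ltW a0) (sqr_ge0 _).
have Y0 : 0 <= Y by apply: le_trans (HM _ _); exact: mulr_ge0 (ltW a0) (sqr_ge0 _).
have F1 : ip d mu = - tau * X.
  rewrite hd (ipZl H) (ipDl H).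
  have -> : ip (S Phihat mu) mu = 0.
    have := Hskew Phihat mu mu; rewrite (ipC H mu) => h; lra.
  by rewrite /X (ipNl H); ring.
have F2 : ip d mu = ip d (Lc Phihalf) + tau * A * Y
          + 3 / 2 * ip d (gradf Phin) - 2^-1 * ip d (gradf Phinm1).
  rewrite /mu -/d !(ipDr H, ipNr H, ipZr H) /Y (ipNl H) (ipC H d (M Phihat d)); ring.
have F3 : ip d (Lc Phihalf) = 2^-1 * (ip Phinp1 (Lc Phinp1) - ip Phin (Lc Phin)).
  rewrite /Phihalf linearZ linearD /d !(ipDr H, ipBl H, ipZr H).
  have := Hsym Phin Phinp1; rewrite (ipC H _ Phinp1) => ->; ring.
have F4 := @descent _ _ _ _ _ _ Phin Phinp1 H Hg Hlip.
rewrite -/d in F4.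
have F5 : - (ip d (gradf Phin) - ip d (gradf Phinm1)) <= `|d| * (L * `|d'|).
  rewrite -(ipBr H) -(ipNl H).
  apply: le_trans (ip_CS H _ _) _.
  by rewrite normrN ler_wpM2l // Hlip.
have Ld : 0 <= L * `|d| by apply: le_trans (Hlip _ _); apply: normr_ge0.
have Ld' : 0 <= L * `|d'| by apply: le_trans (Hlip _ _); apply: normr_ge0.
have F5' : `|d| * (L * `|d'|) <= L / 2 * (`|d| ^+ 2 + `|d'| ^+ 2).
  have [L0|L0] := lerP 0 L.
    have := sqr_ge0 (`|d| - `|d'|); nra.
  have nd : `|d| = 0.
    apply/eqP; rewrite eq_le normr_ge0 andbT; nra.
  have nd' : `|d'| = 0.
    apply/eqP; rewrite eq_le normr_ge0 andbT; nra.
  by rewrite nd nd' expr0n /=; lra.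
set c := 1 + betaS / alphaM.
set r := Num.sqrt (X * Y).
have r0 : 0 <= r by apply: sqrtr_ge0.
have rr : r ^+ 2 = X * Y by rewrite sqr_sqrtr // mulr_ge0.
have F6 : `|d| ^+ 2 <= tau * c * r.
  set B := ip (- M Phihat mu) d.
  have e1 : ip d d = tau * (- B + ip (S Phihat mu) d).
    by rewrite {1}hd (ipZl H) (ipDl H) /B (ipNl H) opprK.
  have hB : B ^+ 2 <= X * Y.
    apply: (@CS_bil R V (fun u v => ip (- M Phihat u) v)).
    - by move=> u v /=; rewrite HMsym (ipC H).
    - by move=> a u v z /=; rewrite !(ipNl H) linearD linearZ /= (ipDl H) (ipZl H); ring.
    - by move=> u; apply: le_trans (HM _ _); exact: mulr_ge0 (ltW a0) (sqr_ge0 _).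
  have hB' : - B <= r by nra.
  have hSd := HS Phihat mu d.
  have nm := normr_ge0 mu; have nd := normr_ge0 d.
  have har : alphaM * `|mu| * `|d| <= r.
    have h1 : (alphaM * `|mu| * `|d|) ^+ 2 <= r ^+ 2.
      rewrite rr.
      have -> : (alphaM * `|mu| * `|d|) ^+ 2 = (alphaM * `|mu| ^+ 2) * (alphaM * `|d| ^+ 2) by ring.
      apply: ler_pM; [exact: mulr_ge0 (ltW a0) (sqr_ge0 _)|exact: mulr_ge0 (ltW a0) (sqr_ge0 _)|exact: HM|exact: HM].
    have : 0 <= alphaM * `|mu| * `|d| by rewrite !mulr_ge0 // ltW.
    nra.
  have hbr : betaS * `|mu| * `|d| <= betaS / alphaM * r.
    have -> : betaS * `|mu| * `|d| = betaS / alphaM * (alphaM * `|mu| * `|d|) by field; rewrite gt_eqF.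
    by rewrite ler_wpM2l // divr_ge0 // ltW.
  rewrite (normsq H) e1 /c.
  have := ltW t0; nra.
have sA : Num.sqrt A ^+ 2 = A by rewrite sqr_sqrtr // ltW.
have s0 : 0 <= Num.sqrt A by apply: sqrtr_ge0.
have c0 : 0 < c by rewrite /c; have := divr_gt0 b0 a0; lra.
have G1 : 2 * Num.sqrt A * r <= X + A * Y.
  have q0 : 0 <= 2 * Num.sqrt A * r by rewrite !mulr_ge0.
  have P0 : 0 <= X + A * Y by rewrite addr_ge0 // mulr_ge0 // ltW.
  have hq : (2 * Num.sqrt A * r) ^+ 2 <= (X + A * Y) ^+ 2.
    have -> : (2 * Num.sqrt A * r) ^+ 2 = 4 * A * (X * Y) by rewrite !exprMn sA rr; ring.
    have := sqr_ge0 (X - A * Y); lra.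
  nra.
have G2 : c^-1 * `|d| ^+ 2 <= tau * r.
  rewrite ler_pdivrMl //; lra.
rewrite /E_CN.
have e : ip Phinp1 (Lc Phinp1) - ip Phin (Lc Phin) = 2 * ip d (Lc Phihalf) by rewrite F3; field.
have : 2 * Num.sqrt A * (c^-1 * `|d| ^+ 2) <= tau * (X + A * Y).
  apply: le_trans (_ : 2 * Num.sqrt A * (tau * r) <= _).
    by apply: ler_wpM2l => //; rewrite mulr_ge0.
    by nra.
move=> G.
rewrite -/d -/d' in F4 F5 F5' *.
have F12 : ip d (Lc Phihalf) = - tau * X - tau * A * Y - 3 / 2 * ip d (gradf Phin) + 2^-1 * ip d (gradf Phinm1) by rewrite -F1 F2; ring.
have E2 : 2^-1 * ip Phinp1 (Lc Phinp1) - 2^-1 * ip Phin (Lc Phin) = ip d (Lc Phihalf) by rewrite F3; ring.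
rewrite (ipC H (gradf Phin) d) in F4.
move: F12 E2 F4 F5 F5' G. rewrite /c. set s := Num.sqrt A. set u := ip d (Lc Phihalf). set i1 := ip d (gradf Phin). set i0 := ip d (gradf Phinm1). set n1 := `|d|. set n0 := `|d'|. set ci := (1 + betaS / alphaM)^-1. rewrite [2 / _]mulrC -/ci. lra.
Qed.
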